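(* In the setting described in the context, let $\Xi > 0$ be a constant with the following property (P): whenever $1 \leq k \leq q$, $x \in \Omega$ with $-2\Xi^{-1} \leq u_k(x) \leq 0$, and $a_0,\dots,a_{k-1} \geq 0$ with $a_i = 0$ for all $i$ with $u_i(x) \leq -2\Xi^{-1}$, one has $\sum_{i=0}^{k-1} a_i \leq \Xi |(\sum_{i=0}^{k-1} a_i N_i) \wedge N_k|$. Then for every $\gamma \in (0,\frac12)$ there exists $\bar\lambda$ such that for all $\lambda_0 \geq \bar\lambda$ the following holds: if $0 \leq j < k \leq q$ and $x \in \Omega$ satisfies $-\Xi^{-1} \leq \hat u_j(x) \leq 0$ and $-\Xi^{-1} \leq u_k(x) \leq 0$, then $|d\hat u_j \wedge du_k| \geq \Xi^{-1}$ at $x$.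
   Context: $n\ge3$; $u_0,\dots,u_q$ are non-constant linear (affine) functions on $\mathbb{R}^n$ and $\Omega=\bigcap_{m=0}^q\{u_m\le 0\}$ is a compact convex polytope with non-empty interior, such that: (a) for each $k$, $\{u_k>0\}\cap\bigcap_{m\neq k}\{u_m\le0\}\neq\emptyset$; (b) the Euclidean gradient of each $u_k$ is a unit vector $N_k$; (c) for $j<k$, if some $x\in\Omega$ has $u_j(x)=u_k(x)=0$ then $\langle N_j,N_k\rangle\le0$. Fix a smooth even $\eta:\mathbb{R}\to\mathbb{R}$ with $\eta(t)=|t|$ for $|t|\ge\frac12$ and $\eta''\ge0$. For $\gamma\in(0,\frac12)$, $\lambda_0>1$ put $\lambda_k=\gamma^{-k}\lambda_0$, $\hat u_0=u_0$, $\hat u_k=\frac12\big(\hat u_{k-1}+u_k+\lambda_k^{-1}\eta(\lambda_k(\hat u_{k-1}-u_k))\big)$ for $1\le k\le q$. For 1-forms/vectors, $|v\wedge w|$ denotes the Euclidean norm of the wedge product, $|v\wedge w|^2=|v|^2|w|^2-\langle v,w\rangle^2$. *)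

(* Defs.v *)
From HB Require Import structures.
From mathcomp Require Import all_boot all_order all_algebra.
From mathcomp Require Import all_classical all_reals all_analysis.
Set Implicit Arguments. Unset Strict Implicit. Unset Printing Implicit Defensive.
Import Order.TTheory GRing.Theory Num.Theory.
Import numFieldNormedType.Exports.
Local Open Scope ring_scope.

Definition edot (R : realType) (n : nat) (v w : 'rV[R]_n) : R :=
  \sum_(i < n) v 0 i * w 0 i.

(* Euclidean norm of the wedge product: |v^w|^2 = |v|^2|w|^2 - <v,w>^2 *)
Definition wedge_norm (R : realType) (n : nat) (v w : 'rV[R]_n) : R :=
  Num.sqrt (edot v v * edot w w - edot v w ^+ 2).

Definition grad (R : realType) (n : nat) (f : 'rV[R]_n -> R) (x : 'rV[R]_n)
  : 'rV[R]_n := \row_(i < n) derive f x (delta_mx 0 i).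

Definition uaff (R : realType) (n : nat) (N : nat -> 'rV[R]_n) (c : nat -> R)
  (k : nat) (x : 'rV[R]_n) : R := edot (N k) x + c k.

Definition lam (R : realType) (gamma lam0 : R) (k : nat) : R :=
  gamma ^- k * lam0.

Fixpoint uhat (R : realType) (n : nat) (eta : R -> R) (gamma lam0 : R)
  (u : nat -> 'rV[R]_n -> R) (k : nat) (x : 'rV[R]_n) : R :=
  match k with
  | 0 => u 0 x
  | k'.+1 =>
      let p := uhat eta gamma lam0 u k' x in
      let l := lam gamma lam0 k in
      (p + u k x + l^-1 * eta (l * (p - u k x))) / 2
  end.

Definition Omega (R : realType) (n : nat) (u : nat -> 'rV[R]_n -> R) (q : nat)
  : set 'rV[R]_n := [set x | forall m, (m <= q)%N -> u m x <= 0].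

(* Main.v *)
Require Import Defs.
From HB Require Import structures.
From mathcomp Require Import all_boot all_order all_algebra.
From mathcomp Require Import all_classical all_reals all_analysis.
From mathcomp Require Import ring lra.
Import Order.TTheory GRing.Theory Num.Theory.
Import numFieldNormedType.Exports.
Local Open Scope ring_scope.
Local Open Scope classical_set_scope.

Section Eta.
Variable R : realType.
Variable eta : R -> R.
Hypothesis hder : forall m t, derivable (derive1n m eta) t 1.
Hypothesis habs : forall t, 2^-1 <= `|t| -> eta t = `|t|.
Hypothesis hconv : forall t, 0 <= derive1n 2 eta t.

Lemma eta_d_ge1 t : 1 <= t -> eta^`() t = 1.
Proof.
move=> t1; rewrite derive1E (@near_eq_derive _ _ _ eta id t 1) ?derive_id //.
near=> y; have : 2^-1 < y by near: y; apply: lt_nbhsr; lra.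
move=> hy; rewrite habs ger0_norm //; lra.
Unshelve. all: by end_near. Qed.

Lemma eta_d_leN1 t : t <= -1 -> eta^`() t = -1.
Proof.
move=> t1; rewrite derive1E (@near_eq_derive _ _ _ eta -%R t 1).
  by have [_ ->] := is_deriveNid t 1.
near=> y; have : y < - 2^-1 by near: y; apply: lt_nbhsl; lra.
move=> hy; rewrite habs ler0_norm //; lra.
Unshelve. all: by end_near. Qed.

Lemma eta_d_mono a b : a < b -> eta^`() a <= eta^`() b.
Proof.
move=> ab.
have hcont : {within `[a, b], continuous eta^`()}.
  by apply: derivable_within_continuous => x _; exact: (hder 1 x).
have [c _ hc] := @MVT R (eta^`()) (derive1n 2 eta) a b ab
  (fun x _ => is_derive_eq (derivableP (hder 1 x)) (esym (derive1E _ _))) hcont.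
rewrite -subr_ge0 hc; apply: mulr_ge0; first exact: hconv.
by rewrite subr_ge0 ltW.
Qed.

Lemma eta_d_bound t : -1 <= eta^`() t <= 1.
Proof.
apply/andP; split.
  have [t1|t1] := leP t (-1); first by rewrite eta_d_leN1.
  by rewrite -((@eta_d_leN1 (-1) (lexx _))); apply: eta_d_mono.
have [t1|t1] := leP 1 t; first by rewrite eta_d_ge1.
by rewrite -((@eta_d_ge1 1 (lexx _))); apply: eta_d_mono.
Qed.

Lemma eta_le t : eta t <= `|t| + 2.
Proof.
have [t1|t1] := leP 1 t; first by rewrite habs ?ger0_norm; lra.
have hcont : {within `[t, 1], continuous eta}.
  by apply: derivable_within_continuous => x _; exact: (hder 0 x).
have [c _ hc] := @MVT R eta (eta^`()) t 1 t1
  (fun x _ => is_derive_eq (derivableP (hder 0 x)) (esym (derive1E _ _))) hcont.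
have e1 : eta 1 = 1 by rewrite habs ?normr1 //; lra.
have := eta_d_bound c; rewrite e1 in hc.
have : eta t = 1 - derive1 eta c * (1 - t) by rewrite -hc; ring.
move=> ->; case/andP => h1 h2.
have : 0 <= 1 - t by lra.
have : - t <= `|t| by rewrite -normrN ler_norm.
nra.
Qed.
End Eta.
Lemma derive_dir (R : realType) n (f : 'rV[R]_n -> R) x v :
  derive f x v = derive (fun h : R => f (h *: v + x)) 0 1.
Proof.
rewrite /derive; set g1 := fun h => h^-1 *: _; set g2 := fun h => h^-1 *: _.
suff -> : g1 = g2 by [].
by rewrite funeqE /g1 /g2 => h /=; rewrite addr0 scale0r add0r [_%:A]mulr1.
Qed.

Lemma step_deriv (R : realType) (eta : R -> R) (f g : R -> R) (a b l : R) :
  l != 0 -> derivable eta (l * (f 0 - g 0)) 1 ->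
  is_derive (0:R) 1 f a -> is_derive (0:R) 1 g b ->
  is_derive (0:R) 1 (fun h => (f h + g h + l^-1 * eta (l * (f h - g h))) / 2)
   ((1 + derive1 eta (l * (f 0 - g 0))) / 2 * a
    + (1 - derive1 eta (l * (f 0 - g 0))) / 2 * b).
Proof.
move=> l0 deta df dg.
pose H := l *: (f - g).
have dH : is_derive (0:R) 1 H (l *: (a - b)) by exact: is_deriveZ.
have HE : forall h, H h = l * (f h - g h) by [].
have dE : is_derive (0:R) 1 (eta \o H) (derive1 eta (H 0) * (l * (a - b))).
  have derH : derivable H 0 1 by case: dH.
  have deta' : derivable eta (H 0) 1 by rewrite HE.
  apply: DeriveDef.
    apply/derivable1_diffP; apply: differentiable_comp.
      exact/derivable1_diffP.
    exact/derivable1_diffP.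
  rewrite -derive1E derive1_comp //.
  by congr (_ * _); rewrite derive1E; case: dH => _ ->.
have -> : (fun h => (f h + g h + l^-1 * eta (l * (f h - g h))) / 2) =
   2^-1 *: (f + g + l^-1 *: (eta \o H)).
  by apply/funext => h /=; rewrite /H /= mulrC.
apply: is_derive_eq; rewrite HE.
have sE : forall u w : R, u *: w = u * w by [].
by rewrite !sE; field.
Qed.
Lemma edot_lin (R : realType) n (w v x : 'rV[R]_n) (h : R) :
  edot w (h *: v + x) = h * edot w v + edot w x.
Proof.
rewrite /edot mulr_sumr -big_split; apply: eq_bigr => i _; rewrite !mxE /=; ring.
Qed.

Lemma uaff_deriv (R : realType) n (N : nat -> 'rV[R]_n) c k x v :
  is_derive (0:R) 1 (fun h : R => uaff N c k (h *: v + x)) (edot (N k) v).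
Proof.
have -> : (fun h : R => uaff N c k (h *: v + x)) =
   (edot (N k) v) *: (@id R) + cst (uaff N c k x).
  by apply/funext => h /=; rewrite /uaff edot_lin -addrA mulrC.
have := is_deriveD (is_deriveZ (edot (N k) v) (@is_derive_id _ _ (0:R) 1))
   (is_derive_cst (uaff N c k x) (0:R) 1).
move=> H; apply: is_derive_eq.
by rewrite addr0 [_%:A]mulr1.
Qed.

Definition sw {R : realType} {n} (eta : R -> R) (gamma lam0 : R) (N : nat -> 'rV[R]_n) (c : nat -> R)
  (x : 'rV[R]_n) (j : nat) : R :=
  (1 + derive1 eta (lam gamma lam0 j.+1 *
     (uhat eta gamma lam0 (uaff N c) j x - uaff N c j.+1 x))) / 2.

Fixpoint Aw {R : realType} {n} (eta : R -> R) (gamma lam0 : R) (N : nat -> 'rV[R]_n) (c : nat -> R)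
  (x : 'rV[R]_n) (j : nat) : nat -> R :=
  match j with
  | 0 => fun i => (i == 0)%:R
  | j'.+1 => fun i => sw eta gamma lam0 N c x j' * Aw eta gamma lam0 N c x j' i
      + (1 - sw eta gamma lam0 N c x j') * (i == j'.+1)%:R
  end.

Lemma sum_delta (R : realType) M k (F : nat -> R) : (k < M)%N ->
  \sum_(i < M) (i == k :> nat)%:R * F i = F k.
Proof.
move=> kM; rewrite (bigD1 (Ordinal kM)) //= eqxx mul1r big1 ?addr0 // => i.
by move=> /negbTE; rewrite -(inj_eq val_inj) /= => ->; rewrite mul0r.
Qed.

Lemma uhat_deriv (R : realType) n (N : nat -> 'rV[R]_n) (c : nat -> R) (eta : R -> R) (gamma lam0 : R) (x v : 'rV[R]_n) :
  0 < gamma -> 0 < lam0 -> (forall t, derivable eta t 1) ->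
  forall j M, (j < M)%N ->
  is_derive (0:R) 1 (fun h : R => uhat eta gamma lam0 (uaff N c) j (h *: v + x))
    (\sum_(i < M) Aw eta gamma lam0 N c x j i * edot (N i) v).
Proof.
move=> g0 l0 deta; elim=> [|j IH] M jM /=.
  by apply: is_derive_eq; [exact: uaff_deriv | rewrite (@sum_delta _ _ _ (fun i => edot (N i) v))].
have lj : lam gamma lam0 j.+1 != 0.
  by rewrite /lam mulf_neq0 ?invr_eq0 ?expf_neq0 // gt_eqF.
have HH := (@step_deriv R eta _ _ _ _ _ lj (deta _) (IH M (ltnW jM)) (@uaff_deriv R n N c j.+1 x v)).
simpl in HH.
eapply is_derive_eq; first exact HH.
rewrite scale0r add0r.
set s := sw eta gamma lam0 N c x j.
under [RHS]eq_bigr => i _ do rewrite mulrDl -(mulrA s) -(mulrA (1 - s)).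
rewrite big_split /= -!mulr_sumr (@sum_delta _ _ _ (fun i => edot (N i) v)) //.
by rewrite /s /sw; field.
Qed.

Lemma edot_delta (R : realType) n (w : 'rV[R]_n) l :
  edot w (delta_mx 0 l) = w 0 l.
Proof.
rewrite /edot (bigD1 l) //= mxE !eqxx mulr1 big1 ?addr0 // => i /negbTE.
by rewrite mxE => ->; rewrite andbF mulr0.
Qed.

Lemma grad_uaff (R : realType) n (N : nat -> 'rV[R]_n) (c : nat -> R) k x :
  grad (uaff N c k) x = N k.
Proof.
apply/rowP => l; rewrite mxE derive_dir.
by case: (@uaff_deriv R n N c k x (delta_mx 0 l)) => _ ->; rewrite edot_delta.
Qed.

Lemma grad_uhat (R : realType) n (N : nat -> 'rV[R]_n) (c : nat -> R)
  (eta : R -> R) (gamma lam0 : R) x j M :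
  0 < gamma -> 0 < lam0 -> (forall t, derivable eta t 1) -> (j < M)%N ->
  grad (uhat eta gamma lam0 (uaff N c) j) x =
  \sum_(i < M) Aw eta gamma lam0 N c x j i *: N i.
Proof.
move=> g0 l0 de jM; apply/rowP => l; rewrite mxE derive_dir.
case: (@uhat_deriv R n N c eta gamma lam0 x (delta_mx 0 l) g0 l0 de j M jM) => _ ->.
rewrite summxE; apply: eq_bigr => i _; by rewrite edot_delta mxE.
Qed.

Lemma lam_facts (R : realType) (gamma lam0 : R) k :
  0 < gamma <= 1 -> 0 < lam0 ->
  0 < lam gamma lam0 k /\ (lam gamma lam0 k)^-1 <= lam0^-1.
Proof.
case/andP=> g0 g1 l0; split.
  by rewrite /lam mulr_gt0 // invr_gt0 exprn_gt0.
rewrite /lam invfM invrK.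
have h1 : gamma ^+ k <= 1 by apply: exprn_ile1 => //; exact: ltW.
have h2 : 0 < lam0^-1 by rewrite invr_gt0.
nra.
Qed.

Lemma bound_step (R : realType) (p u l E : R) : 0 < l ->
  E <= `|l * (p - u)| + 2 ->
  ((p - u < l^-1 -> (p + u + l^-1 * E) / 2 <= u + 2 * l^-1) /\
   (u - p < l^-1 -> (p + u + l^-1 * E) / 2 <= p + 2 * l^-1)).
Proof.
move=> l0 hE.
have il : 0 < l^-1 by rewrite invr_gt0.
have h1 : l^-1 * E <= `|p - u| + 2 * l^-1.
  rewrite normrM gtr0_norm // in hE.
  have := ler_wpM2l (ltW il) hE.
  by rewrite mulrDr mulrA mulVf ?gt_eqF // mul1r [2 * _]mulrC.
have [pu|pu] := leP p u.
  by rewrite ler0_norm ?subr_le0 // in h1; split => hh; lra.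
rewrite ger0_norm in h1; last by rewrite subr_ge0 ltW.
by split => hh; lra.
Qed.

Lemma lt_inv_helper (R : realType) (l y : R) : 0 < l -> l * y < 1 -> y < l^-1.
Proof.
move=> l0 h; rewrite -[y]mul1r -(mulVf (lt0r_neq0 l0)) -mulrA -[X in _ < X]mulr1.
by rewrite ltr_pM2l // invr_gt0.
Qed.

Section Weights.
Variables (R : realType) (n : nat) (N : nat -> 'rV[R]_n) (c : nat -> R)
  (eta : R -> R) (gamma lam0 : R) (x : 'rV[R]_n).
Hypothesis hder : forall m t, derivable (derive1n m eta) t 1.
Hypothesis habs : forall t, 2^-1 <= `|t| -> eta t = `|t|.
Hypothesis hconv : forall t, 0 <= derive1n 2 eta t.
Hypothesis hg : 0 < gamma <= 1.
Hypothesis hl : 0 < lam0.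

Local Notation A := (Aw eta gamma lam0 N c x).
Local Notation s := (sw eta gamma lam0 N c x).
Local Notation p := (fun j => uhat eta gamma lam0 (uaff N c) j x).

Lemma sw_bound j : 0 <= s j <= 1.
Proof.
have := @eta_d_bound R eta hder habs hconv
  (lam gamma lam0 j.+1 * (uhat eta gamma lam0 (uaff N c) j x - uaff N c j.+1 x)).
by rewrite /sw; case/andP => h1 h2; apply/andP; split; lra.
Qed.

Lemma Aw_zero j i : (j < i)%N -> A j i = 0.
Proof.
elim: j i => [|j IH] i ji /=; first by case: i ji.
rewrite IH ?(ltn_trans _ ji) // mulr0 add0r.
by rewrite (_ : (i == j.+1) = false) ?mulr0 //; apply/negbTE; rewrite neq_ltn ji orbT.
Qed.

Lemma Aw_ge0 j i : 0 <= A j i.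
Proof.
elim: j i => [|j IH] i /=; first by rewrite ler0n.
have := sw_bound j; case/andP => h1 h2.
by rewrite addr_ge0 // mulr_ge0 // ?subr_ge0 // ler0n.
Qed.

Lemma Aw_sum j M : (j < M)%N -> \sum_(i < M) A j i = 1.
Proof.
elim: j M => [|j IH] M jM /=.
  apply: etrans (@sum_delta R M 0 (fun _ => 1) jM); apply: eq_bigr => i _.
  by rewrite mulr1.
rewrite big_split /= -mulr_sumr IH ?(ltn_trans _ jM) //.
have -> : \sum_(i < M) (1 - s j) * (i == j.+1 :> nat)%:R = 1 - s j.
  apply: etrans (@sum_delta R M j.+1 (fun _ => 1 - s j) jM); apply: eq_bigr => i _.
  exact: mulrC.
by rewrite mulr1 addrC subrK.
Qed.

Lemma Aw_bound j i : A j i != 0 -> p j <= uaff N c i x + 2 * j.+1%:R * lam0^-1.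
Proof.
have il : 0 < lam0^-1 by rewrite invr_gt0.
elim: j i => [|j IH] i /=.
  case: i => [|i] /= h; last by move: h; rewrite mulr0n eqxx.
  lra.
have [lpos linv] := @lam_facts R gamma lam0 j.+1 hg hl.
set l := lam gamma lam0 j.+1.
set P := uhat eta gamma lam0 (uaff N c) j x.
set u := uaff N c j.+1 x.
have hE := @eta_le R eta hder habs hconv (l * (P - u)).
have [bs1 bs2] := @bound_step R _ _ _ _ lpos hE.
have hsj := sw_bound j.
have [ij|ij|ij] := ltngtP i j.+1.
- have ijle : (i <= j)%N by [].
  rewrite mulr0n mulr0 addr0 mulf_eq0 negb_or => /andP[s0 a0].
  have := IH i a0; rewrite -/P => hP.
  have t1 : -1 < l * (P - u).
    rewrite ltNge; apply/negP => ht; move: s0.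
    by rewrite /sw -/P -/u -/l (@eta_d_leN1 R eta habs _ ht) subrr mul0r eqxx.
  have : u - P < l^-1.
    apply: lt_inv_helper => //; rewrite -opprB mulrN; lra.
  move/bs2 => h; rewrite [j.+2%:R]mulrS; rewrite -/l in h linv; lra.
- by rewrite (@Aw_zero j i (ltnW ij)) mulr0 add0r mulr0n mulr0 eqxx.
- rewrite ij Aw_zero // mulr0 add0r mulr1n mulr1 => s0.
  have t1 : l * (P - u) < 1.
    rewrite ltNge; apply/negP => ht; move: s0.
    rewrite /sw -/P -/u -/l (@eta_d_ge1 R eta habs _ ht).
    have -> : (1:R) - (1 + 1) / 2 = 0 by field.
    by rewrite eqxx.
  have : P - u < l^-1 by apply: lt_inv_helper.
  move/bs1 => h.
  have : 0 <= j.+1%:R :> R by rewrite ler0n.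
  have hk : 0 <= j.+1%:R * lam0^-1 by rewrite mulr_ge0 ?ler0n // ltW.
  rewrite [j.+2%:R]mulrS -/u; rewrite -/l in h linv; lra.
Qed.
End Weights.

Theorem lemma2p11 (R : realType) (n q : nat) (N : nat -> 'rV[R]_n) (c : nat -> R)
  (eta : R -> R) (Xi : R) :
  (3 <= n)%N ->
  (* unit gradients *)
  (forall k, (k <= q)%N -> edot (N k) (N k) = 1) ->
  (* Omega compact with nonempty interior *)
  compact (Omega (uaff N c) q) ->
  (exists x, (Omega (uaff N c) q)° x) ->
  (* (a) *)
  (forall k, (k <= q)%N -> exists x, 0 < uaff N c k x /\
      (forall m, (m <= q)%N -> m <> k -> uaff N c m x <= 0)) ->
  (* (c) *)
  (forall j k, (j < k)%N -> (k <= q)%N ->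
     (exists x, Omega (uaff N c) q x /\ uaff N c j x = 0 /\ uaff N c k x = 0) ->
     edot (N j) (N k) <= 0) ->
  (* eta smooth, even, |t| for |t| >= 1/2, eta'' >= 0 *)
  (forall m t, derivable (derive1n m eta) t 1) ->
  (forall t, eta (- t) = eta t) ->
  (forall t, 2^-1 <= `|t| -> eta t = `|t|) ->
  (forall t, 0 <= derive1n 2 eta t) ->
  (* property (P) *)
  0 < Xi ->
  (forall k x (a : nat -> R), (1 <= k <= q)%N -> Omega (uaff N c) q x ->
     - (2 / Xi) <= uaff N c k x <= 0 ->
     (forall i, (i < k)%N -> 0 <= a i) ->
     (forall i, (i < k)%N -> uaff N c i x <= - (2 / Xi) -> a i = 0) ->
     \sum_(i < k) a i <= Xi * wedge_norm (\sum_(i < k) a i *: N i) (N k)) ->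
  forall gamma, 0 < gamma < 2^-1 ->
  exists lambar : R, forall lam0, 1 < lam0 -> lambar <= lam0 ->
  forall j k x, (j < k)%N -> (k <= q)%N -> Omega (uaff N c) q x ->
    - Xi^-1 <= uhat eta gamma lam0 (uaff N c) j x <= 0 ->
    - Xi^-1 <= uaff N c k x <= 0 ->
    Xi^-1 <= wedge_norm (grad (uhat eta gamma lam0 (uaff N c) j) x)
                        (grad (uaff N c k) x).
Proof.
move=> _ _ _ _ _ _ hder _ habs hconv hXi hP gamma /andP[g0 g1].
exists (3 * (q.+1)%:R * Xi) => lam0 l1 lb j k x jk kq hx /andP[hj1 hj2] /andP[hk1 hk2].
have l0 : 0 < lam0 by lra.
have hg : 0 < gamma <= 1 by apply/andP; split; lra.
have deta : forall t, derivable eta t 1 := hder 0%N.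
have iX : 0 < Xi^-1 by rewrite invr_gt0.
rewrite grad_uaff (@grad_uhat R n N c eta gamma lam0 x j k g0 l0 deta jk).
have hs := @Aw_sum R n N c eta gamma lam0 x j k jk.
have k1 : (1 <= k <= q)%N by rewrite kq andbT (leq_ltn_trans _ jk).
have hk : - (2 / Xi) <= uaff N c k x <= 0 by apply/andP; split; lra.
have H1 := hP k x (Aw eta gamma lam0 N c x j) k1 hx hk
  (fun i _ => @Aw_ge0 R n N c eta gamma lam0 x hder habs hconv j i).
rewrite hs in H1.
rewrite -(ler_pM2l hXi) mulfV ?gt_eqF //; apply: H1 => i ik hu.
case: (eqVneq (Aw eta gamma lam0 N c x j i) 0) => // hne; exfalso.
have hb := @Aw_bound R n N c eta gamma lam0 x hder habs hconv hg l0 j i hne.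
have hjq : (j.+1 <= q)%N by apply: leq_trans jk kq.
have hJ : j.+1%:R <= q.+1%:R :> R by rewrite ler_nat ltnW.
have key : 2 * j.+1%:R * Xi < lam0.
  have : 0 <= j.+1%:R :> R by rewrite ler0n.
  nra.
have : 2 * j.+1%:R / lam0 < Xi^-1.
  rewrite -subr_gt0.
  have -> : Xi^-1 - 2 * j.+1%:R / lam0 = (lam0 - 2 * j.+1%:R * Xi) * (lam0^-1 * Xi^-1).
    by field; apply/andP; split; rewrite gt_eqF.
  by rewrite mulr_gt0 ?subr_gt0 // mulr_gt0 // invr_gt0.
move: hb => /= hb.
have : 2 / Xi = 2 * Xi^-1 by [].
lra.
Qed.
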